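(* Let $(\chi,u)$ be a rooted chirotope with ground set $X\cup\{u\}$, and let $\widetilde\chi$ be the function on ordered triples of distinct elements of $X\cup\{v\}$ ($v$ a new element) defined by $\widetilde\chi(x,y,z)=\chi(x,y,z)$ for $x,y,z\in X$ and $\widetilde\chi(x,y,v)=-\chi(x,y,u)$ for distinct $x,y\in X$ (extended to all orderings by the alternating symmetry). Then $\widetilde\chi$ is a chirotope. Moreover, if $\chi$ is realizable, then $\widetilde\chi$ is realizable as well.
   Context: For a finite set $E$, a sign function on $E$ is a map $\chi$ from ordered triples of distinct elements of $E$ to $\{-1,1\}$ with $\chi(x,y,z)=\chi(y,z,x)=\chi(z,x,y)=-\chi(z,y,x)=-\chi(y,x,z)=-\chi(x,z,y)$. A chirotope is a sign function that moreover satisfies: (interiority) for distinct $t,x,y,z$, if $\chi(t,y,z)=\chi(x,t,z)=\chi(x,y,t)=1$ then $\chi(x,y,z)=1$; (transitivity) for distinct $s,t,x,y,z$, if $\chi(t,s,x)=\chi(t,s,y)=\chi(t,s,z)=\chi(x,y,t)=\chi(y,z,t)=1$ then $\chi(x,z,t)=1$. It is realizable if there are points in $\mathbb R^2$, no three collinear, indexed by $E$, with $\chi(x,y,z)=1$ iff the corresponding points are in counterclockwise order. An element $u$ is extreme if there is $y\ne u$ with $\chi(u,y,z)$ constant over $z\in E\setminus\{u,y\}$; a rooted chirotope is a pair $(\chi,u)$ with $u$ extreme. The rooted pair $(\widetilde\chi,v)$ is called the twist of $(\chi,u)$. *)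

(* Defs.v *)
From mathcomp Require Import all_boot.
From Stdlib Require Import ZArith Reals.

Set Implicit Arguments.
Unset Strict Implicit.

Definition distinct3 {E : Type} (x y z : E) : Prop := x <> y /\ y <> z /\ x <> z.

Definition sign_function {E : Type} (chi : E -> E -> E -> Z) : Prop :=
  forall x y z, distinct3 x y z ->
    (chi x y z = 1%Z \/ chi x y z = (-1)%Z) /\
    chi x y z = chi y z x /\ chi x y z = chi z x y /\
    chi x y z = (- chi z y x)%Z /\ chi x y z = (- chi y x z)%Z /\
    chi x y z = (- chi x z y)%Z.

Definition interiority {E : Type} (chi : E -> E -> E -> Z) : Prop :=
  forall t x y z, t <> x -> t <> y -> t <> z -> distinct3 x y z ->
    chi t y z = 1%Z -> chi x t z = 1%Z -> chi x y t = 1%Z -> chi x y z = 1%Z.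

Definition transitivity {E : Type} (chi : E -> E -> E -> Z) : Prop :=
  forall s t x y z,
    s <> t -> s <> x -> s <> y -> s <> z -> t <> x -> t <> y -> t <> z ->
    distinct3 x y z ->
    chi t s x = 1%Z -> chi t s y = 1%Z -> chi t s z = 1%Z ->
    chi x y t = 1%Z -> chi y z t = 1%Z -> chi x z t = 1%Z.

Definition chirotope {E : Type} (chi : E -> E -> E -> Z) : Prop :=
  sign_function chi /\ interiority chi /\ transitivity chi.

Definition orient_det (p q r : R * R) : R :=
  ((fst q - fst p) * (snd r - snd p) - (snd q - snd p) * (fst r - fst p))%R.

Definition realizable {E : Type} (chi : E -> E -> E -> Z) : Prop :=
  exists p : E -> R * R,
    (forall x y, p x = p y -> x = y) /\
    (forall x y z, distinct3 x y z -> orient_det (p x) (p y) (p z) <> 0%R) /\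
    (forall x y z, distinct3 x y z ->
        (chi x y z = 1%Z <-> (orient_det (p x) (p y) (p z) > 0)%R)).

Definition extreme {E : Type} (chi : E -> E -> E -> Z) (u : E) : Prop :=
  exists y, y <> u /\
    forall z z', z <> u -> z <> y -> z' <> u -> z' <> y -> chi u y z = chi u y z'.

Definition rooted_chirotope {E : Type} (chi : E -> E -> E -> Z) (u : E) : Prop :=
  chirotope chi /\ extreme chi u.

(* Ground set X ∪ {u} is modelled as option X with u = None; the twist lives on
   X ∪ {v}, again option X with v = None.  On triples inside X it agrees with
   chi; a triple containing v gets the opposite sign of the same triple with u.
   (For the ordering (x,y,v) this is the defining rule; the other orderings are
   its alternating extension, which amounts to the same rule, because chi is
   alternating.) *)
Definition twist {X : Type} (chi : option X -> option X -> option X -> Z)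
    (a b c : option X) : Z :=
  match a, b, c with
  | Some _, Some _, Some _ => chi a b c
  | _, _, _ => (- chi a b c)%Z
  end.

(* Main.v *)
Require Import Defs.
From mathcomp Require Import all_boot.
From Stdlib Require Import ZArith Reals.
From Stdlib Require Import Lia Lra Psatz Classical.
From mathcomp Require Import all_boot.

Set Implicit Arguments.
Unset Strict Implicit.


Lemma gA1 (E : Type) (chi : E -> E -> E -> Z) (Hsf : sign_function chi) (Hint : interiority chi) (Htr : transitivity chi)
  (p0 p1 p2 p3 p4 : E)
  (n01 : p0 <> p1)
  (n02 : p0 <> p2)
  (n03 : p0 <> p3)
  (n04 : p0 <> p4)
  (n12 : p1 <> p2)
  (n13 : p1 <> p3)
  (n14 : p1 <> p4)
  (n23 : p2 <> p3)
  (n24 : p2 <> p4)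
  (n34 : p3 <> p4)
  (H0 : chi p0 p2 p3 = 1%Z)
  (H1 : chi p0 p3 p4 = 1%Z)
  (H2 : chi p0 p4 p2 = 1%Z)
  (H3 : chi p0 p1 p2 = 1%Z)
  (H4 : chi p0 p1 p3 = 1%Z)
  (H5 : chi p0 p1 p4 = 1%Z) :
  False.
Proof.
have n10 := nesym n01.
have n20 := nesym n02.
have n30 := nesym n03.
have n40 := nesym n04.
have n21 := nesym n12.
have n31 := nesym n13.
have n41 := nesym n14.
have n32 := nesym n23.
have n42 := nesym n24.
have n43 := nesym n34.
have [V0 [R0a [R0b [R0c [R0d R0e]]]]] := Hsf p0 p1 p2 (conj n01 (conj n12 n02));
have [V1 [R1a [R1b [R1c [R1d R1e]]]]] := Hsf p0 p1 p3 (conj n01 (conj n13 n03));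
have [V2 [R2a [R2b [R2c [R2d R2e]]]]] := Hsf p0 p1 p4 (conj n01 (conj n14 n04));
have [V3 [R3a [R3b [R3c [R3d R3e]]]]] := Hsf p0 p2 p3 (conj n02 (conj n23 n03));
have [V4 [R4a [R4b [R4c [R4d R4e]]]]] := Hsf p0 p2 p4 (conj n02 (conj n24 n04));
have [V5 [R5a [R5b [R5c [R5d R5e]]]]] := Hsf p0 p3 p4 (conj n03 (conj n34 n04));
have [V6 [R6a [R6b [R6c [R6d R6e]]]]] := Hsf p1 p2 p3 (conj n12 (conj n23 n13));
have [V7 [R7a [R7b [R7c [R7d R7e]]]]] := Hsf p1 p2 p4 (conj n12 (conj n24 n14));
have [V8 [R8a [R8b [R8c [R8d R8e]]]]] := Hsf p1 p3 p4 (conj n13 (conj n34 n14));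
have [V9 [R9a [R9b [R9c [R9d R9e]]]]] := Hsf p2 p3 p4 (conj n23 (conj n34 n24));
idtac.
have F3 : chi p0 p2 p3 = 1%Z by move: H0 R3a R3b R3c R3d R3e; clear -chi; lia.
have F5 : chi p0 p3 p4 = 1%Z by move: H1 R5a R5b R5c R5d R5e; clear -chi; lia.
have F4 : chi p0 p2 p4 = (-1)%Z by move: H2 R4a R4b R4c R4d R4e; clear -chi; lia.
have F0 : chi p0 p1 p2 = 1%Z by move: H3 R0a R0b R0c R0d R0e; clear -chi; lia.
have F1 : chi p0 p1 p3 = 1%Z by move: H4 R1a R1b R1c R1d R1e; clear -chi; lia.
have F2 : chi p0 p1 p4 = 1%Z by move: H5 R2a R2b R2c R2d R2e; clear -chi; lia.
have F9 : chi p2 p3 p4 = 1%Z by move: (Hint p0 p2 p3 p4 n02 n03 n04 (conj n23 (conj n34 n24)) ltac:(move: F5 R5a R5b R5c R5d R5e; clear -chi; lia) ltac:(move: F4 R4a R4b R4c R4d R4e; clear -chi; lia) ltac:(move: F3 R3a R3b R3c R3d R3e; clear -chi; lia)) R9a R9b R9c R9d R9e; clear -chi; lia.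
move: (Htr p1 p0 p2 p3 p4 n10 n12 n13 n14 n02 n03 n04 (conj n23 (conj n34 n24)) ltac:(move: F0 R0a R0b R0c R0d R0e; clear -chi; lia) ltac:(move: F1 R1a R1b R1c R1d R1e; clear -chi; lia) ltac:(move: F2 R2a R2b R2c R2d R2e; clear -chi; lia) ltac:(move: F3 R3a R3b R3c R3d R3e; clear -chi; lia) ltac:(move: F5 R5a R5b R5c R5d R5e; clear -chi; lia)) F4 R4a R4b R4c R4d R4e; clear -chi; lia.
Qed.

Lemma gA2 (E : Type) (chi : E -> E -> E -> Z) (Hsf : sign_function chi) (Hint : interiority chi) (Htr : transitivity chi)
  (p0 p1 p2 p3 p4 : E)
  (n01 : p0 <> p1)
  (n02 : p0 <> p2)
  (n03 : p0 <> p3)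
  (n04 : p0 <> p4)
  (n12 : p1 <> p2)
  (n13 : p1 <> p3)
  (n14 : p1 <> p4)
  (n23 : p2 <> p3)
  (n24 : p2 <> p4)
  (n34 : p3 <> p4)
  (H0 : chi p0 p2 p3 = 1%Z)
  (H1 : chi p0 p3 p4 = 1%Z)
  (H2 : chi p0 p4 p2 = 1%Z)
  (H3 : chi p0 p1 p2 = (-1)%Z)
  (H4 : chi p0 p1 p3 = (-1)%Z)
  (H5 : chi p0 p1 p4 = (-1)%Z) :
  False.
Proof.
have n10 := nesym n01.
have n20 := nesym n02.
have n30 := nesym n03.
have n40 := nesym n04.
have n21 := nesym n12.
have n31 := nesym n13.
have n41 := nesym n14.
have n32 := nesym n23.
have n42 := nesym n24.
have n43 := nesym n34.
have [V0 [R0a [R0b [R0c [R0d R0e]]]]] := Hsf p0 p1 p2 (conj n01 (conj n12 n02));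
have [V1 [R1a [R1b [R1c [R1d R1e]]]]] := Hsf p0 p1 p3 (conj n01 (conj n13 n03));
have [V2 [R2a [R2b [R2c [R2d R2e]]]]] := Hsf p0 p1 p4 (conj n01 (conj n14 n04));
have [V3 [R3a [R3b [R3c [R3d R3e]]]]] := Hsf p0 p2 p3 (conj n02 (conj n23 n03));
have [V4 [R4a [R4b [R4c [R4d R4e]]]]] := Hsf p0 p2 p4 (conj n02 (conj n24 n04));
have [V5 [R5a [R5b [R5c [R5d R5e]]]]] := Hsf p0 p3 p4 (conj n03 (conj n34 n04));
have [V6 [R6a [R6b [R6c [R6d R6e]]]]] := Hsf p1 p2 p3 (conj n12 (conj n23 n13));
have [V7 [R7a [R7b [R7c [R7d R7e]]]]] := Hsf p1 p2 p4 (conj n12 (conj n24 n14));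
have [V8 [R8a [R8b [R8c [R8d R8e]]]]] := Hsf p1 p3 p4 (conj n13 (conj n34 n14));
have [V9 [R9a [R9b [R9c [R9d R9e]]]]] := Hsf p2 p3 p4 (conj n23 (conj n34 n24));
idtac.
have F3 : chi p0 p2 p3 = 1%Z by move: H0 R3a R3b R3c R3d R3e; clear -chi; lia.
have F5 : chi p0 p3 p4 = 1%Z by move: H1 R5a R5b R5c R5d R5e; clear -chi; lia.
have F4 : chi p0 p2 p4 = (-1)%Z by move: H2 R4a R4b R4c R4d R4e; clear -chi; lia.
have F0 : chi p0 p1 p2 = (-1)%Z by move: H3 R0a R0b R0c R0d R0e; clear -chi; lia.
have F1 : chi p0 p1 p3 = (-1)%Z by move: H4 R1a R1b R1c R1d R1e; clear -chi; lia.
have F2 : chi p0 p1 p4 = (-1)%Z by move: H5 R2a R2b R2c R2d R2e; clear -chi; lia.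
have F9 : chi p2 p3 p4 = 1%Z by move: (Hint p0 p2 p3 p4 n02 n03 n04 (conj n23 (conj n34 n24)) ltac:(move: F5 R5a R5b R5c R5d R5e; clear -chi; lia) ltac:(move: F4 R4a R4b R4c R4d R4e; clear -chi; lia) ltac:(move: F3 R3a R3b R3c R3d R3e; clear -chi; lia)) R9a R9b R9c R9d R9e; clear -chi; lia.
case: V6 => F6.
{
  have F7 : chi p1 p2 p4 = (-1)%Z by case: V7 => F7; first [ exact F7 | exfalso; move: (Htr p3 p2 p0 p4 p1 n32 n30 n34 n31 n20 n24 n21 (conj n04 (conj n41 n01)) ltac:(move: F3 R3a R3b R3c R3d R3e; clear -chi; lia) ltac:(move: F9 R9a R9b R9c R9d R9e; clear -chi; lia) ltac:(move: F6 R6a R6b R6c R6d R6e; clear -chi; lia) ltac:(move: F4 R4a R4b R4c R4d R4e; clear -chi; lia) ltac:(move: F7 R7a R7b R7c R7d R7e; clear -chi; lia)) F0 R0a R0b R0c R0d R0e; clear -chi; lia ].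
  have F8 : chi p1 p3 p4 = (-1)%Z by case: V8 => F8; first [ exact F8 | exfalso; move: (Htr p0 p1 p2 p3 p4 n01 n02 n03 n04 n12 n13 n14 (conj n23 (conj n34 n24)) ltac:(move: F0 R0a R0b R0c R0d R0e; clear -chi; lia) ltac:(move: F1 R1a R1b R1c R1d R1e; clear -chi; lia) ltac:(move: F2 R2a R2b R2c R2d R2e; clear -chi; lia) ltac:(move: F6 R6a R6b R6c R6d R6e; clear -chi; lia) ltac:(move: F8 R8a R8b R8c R8d R8e; clear -chi; lia)) F7 R7a R7b R7c R7d R7e; clear -chi; lia ].
  move: (Htr p2 p4 p0 p3 p1 n24 n20 n23 n21 n40 n43 n41 (conj n03 (conj n31 n01)) ltac:(move: F4 R4a R4b R4c R4d R4e; clear -chi; lia) ltac:(move: F9 R9a R9b R9c R9d R9e; clear -chi; lia) ltac:(move: F7 R7a R7b R7c R7d R7e; clear -chi; lia) ltac:(move: F5 R5a R5b R5c R5d R5e; clear -chi; lia) ltac:(move: F8 R8a R8b R8c R8d R8e; clear -chi; lia)) F2 R2a R2b R2c R2d R2e; clear -chi; lia.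
}
{
  have F8 : chi p1 p3 p4 = (-1)%Z by case: V8 => F8; first [ exact F8 | exfalso; move: (Htr p4 p3 p0 p2 p1 n43 n40 n42 n41 n30 n32 n31 (conj n02 (conj n21 n01)) ltac:(move: F5 R5a R5b R5c R5d R5e; clear -chi; lia) ltac:(move: F9 R9a R9b R9c R9d R9e; clear -chi; lia) ltac:(move: F8 R8a R8b R8c R8d R8e; clear -chi; lia) ltac:(move: F3 R3a R3b R3c R3d R3e; clear -chi; lia) ltac:(move: F6 R6a R6b R6c R6d R6e; clear -chi; lia)) F1 R1a R1b R1c R1d R1e; clear -chi; lia ].
  have F7 : chi p1 p2 p4 = (-1)%Z by case: V7 => F7; first [ exact F7 | exfalso; move: (Hint p1 p2 p4 p3 n12 n14 n13 (conj n24 (conj n43 n23)) ltac:(move: F8 R8a R8b R8c R8d R8e; clear -chi; lia) ltac:(move: F6 R6a R6b R6c R6d R6e; clear -chi; lia) ltac:(move: F7 R7a R7b R7c R7d R7e; clear -chi; lia)) F9 R9a R9b R9c R9d R9e; clear -chi; lia ].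
  move: (Htr p2 p4 p0 p3 p1 n24 n20 n23 n21 n40 n43 n41 (conj n03 (conj n31 n01)) ltac:(move: F4 R4a R4b R4c R4d R4e; clear -chi; lia) ltac:(move: F9 R9a R9b R9c R9d R9e; clear -chi; lia) ltac:(move: F7 R7a R7b R7c R7d R7e; clear -chi; lia) ltac:(move: F5 R5a R5b R5c R5d R5e; clear -chi; lia) ltac:(move: F8 R8a R8b R8c R8d R8e; clear -chi; lia)) F2 R2a R2b R2c R2d R2e; clear -chi; lia.
}
Qed.

Lemma gI0 (E : Type) (chi : E -> E -> E -> Z) (Hsf : sign_function chi) (Hint : interiority chi) (Htr : transitivity chi)
  (p0 p1 p2 p3 : E)
  (n01 : p0 <> p1)
  (n02 : p0 <> p2)
  (n03 : p0 <> p3)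
  (n12 : p1 <> p2)
  (n13 : p1 <> p3)
  (n23 : p2 <> p3)
  (NI : forall a b c, a <> b -> b <> c -> a <> c -> a <> p0 -> b <> p0 -> c <> p0 -> chi p0 a b = 1%Z -> chi p0 b c = 1%Z -> chi p0 c a = 1%Z -> False)
  (H0 : chi p0 p2 p3 = (-1)%Z)
  (H1 : chi p1 p0 p3 = (-1)%Z)
  (H2 : chi p1 p2 p0 = (-1)%Z) :
  chi p1 p2 p3 = 1%Z.
Proof.
have n10 := nesym n01.
have n20 := nesym n02.
have n30 := nesym n03.
have n21 := nesym n12.
have n31 := nesym n13.
have n32 := nesym n23.
have [V0 [R0a [R0b [R0c [R0d R0e]]]]] := Hsf p0 p1 p2 (conj n01 (conj n12 n02));
have [V1 [R1a [R1b [R1c [R1d R1e]]]]] := Hsf p0 p1 p3 (conj n01 (conj n13 n03));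
have [V2 [R2a [R2b [R2c [R2d R2e]]]]] := Hsf p0 p2 p3 (conj n02 (conj n23 n03));
have [V3 [R3a [R3b [R3c [R3d R3e]]]]] := Hsf p1 p2 p3 (conj n12 (conj n23 n13));
idtac.
have F2 : chi p0 p2 p3 = (-1)%Z by move: H0 R2a R2b R2c R2d R2e; clear -chi; lia.
have F1 : chi p0 p1 p3 = 1%Z by move: H1 R1a R1b R1c R1d R1e; clear -chi; lia.
have F0 : chi p0 p1 p2 = (-1)%Z by move: H2 R0a R0b R0c R0d R0e; clear -chi; lia.
case: V3 => F3; first [ move: F3 R3a R3b R3c R3d R3e; clear -chi; lia | exfalso ].
exact: (NI p1 p3 p2 n13 n32 n12 n10 n30 n20 ltac:(move: F1 R1a R1b R1c R1d R1e; clear -chi; lia) ltac:(move: F2 R2a R2b R2c R2d R2e; clear -chi; lia) ltac:(move: F0 R0a R0b R0c R0d R0e; clear -chi; lia)).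
Qed.

Lemma gI1 (E : Type) (chi : E -> E -> E -> Z) (Hsf : sign_function chi) (Hint : interiority chi) (Htr : transitivity chi)
  (p0 p1 p2 p3 : E)
  (n01 : p0 <> p1)
  (n02 : p0 <> p2)
  (n03 : p0 <> p3)
  (n12 : p1 <> p2)
  (n13 : p1 <> p3)
  (n23 : p2 <> p3)
  (NI : forall a b c, a <> b -> b <> c -> a <> c -> a <> p0 -> b <> p0 -> c <> p0 -> chi p0 a b = 1%Z -> chi p0 b c = 1%Z -> chi p0 c a = 1%Z -> False)
  (H0 : chi p1 p2 p3 = 1%Z)
  (H1 : chi p0 p1 p3 = (-1)%Z)
  (H2 : chi p0 p2 p1 = (-1)%Z) :
  chi p0 p2 p3 = (-1)%Z.
Proof.
have n10 := nesym n01.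
have n20 := nesym n02.
have n30 := nesym n03.
have n21 := nesym n12.
have n31 := nesym n13.
have n32 := nesym n23.
have [V0 [R0a [R0b [R0c [R0d R0e]]]]] := Hsf p0 p1 p2 (conj n01 (conj n12 n02));
have [V1 [R1a [R1b [R1c [R1d R1e]]]]] := Hsf p0 p1 p3 (conj n01 (conj n13 n03));
have [V2 [R2a [R2b [R2c [R2d R2e]]]]] := Hsf p0 p2 p3 (conj n02 (conj n23 n03));
have [V3 [R3a [R3b [R3c [R3d R3e]]]]] := Hsf p1 p2 p3 (conj n12 (conj n23 n13));
idtac.
have F3 : chi p1 p2 p3 = 1%Z by move: H0 R3a R3b R3c R3d R3e; clear -chi; lia.
have F1 : chi p0 p1 p3 = (-1)%Z by move: H1 R1a R1b R1c R1d R1e; clear -chi; lia.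
have F0 : chi p0 p1 p2 = 1%Z by move: H2 R0a R0b R0c R0d R0e; clear -chi; lia.
case: V2 => F2; first [ move: F2 R2a R2b R2c R2d R2e; clear -chi; lia | exfalso ].
exact: (NI p1 p2 p3 n12 n23 n13 n10 n20 n30 ltac:(move: F0 R0a R0b R0c R0d R0e; clear -chi; lia) ltac:(move: F2 R2a R2b R2c R2d R2e; clear -chi; lia) ltac:(move: F1 R1a R1b R1c R1d R1e; clear -chi; lia)).
Qed.

Lemma gI2 (E : Type) (chi : E -> E -> E -> Z) (Hsf : sign_function chi) (Hint : interiority chi) (Htr : transitivity chi)
  (p0 p1 p2 p3 : E)
  (n01 : p0 <> p1)
  (n02 : p0 <> p2)
  (n03 : p0 <> p3)
  (n12 : p1 <> p2)
  (n13 : p1 <> p3)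
  (n23 : p2 <> p3)
  (NI : forall a b c, a <> b -> b <> c -> a <> c -> a <> p0 -> b <> p0 -> c <> p0 -> chi p0 a b = 1%Z -> chi p0 b c = 1%Z -> chi p0 c a = 1%Z -> False)
  (H0 : chi p1 p0 p3 = (-1)%Z)
  (H1 : chi p2 p1 p3 = 1%Z)
  (H2 : chi p2 p0 p1 = (-1)%Z) :
  chi p2 p0 p3 = (-1)%Z.
Proof.
have n10 := nesym n01.
have n20 := nesym n02.
have n30 := nesym n03.
have n21 := nesym n12.
have n31 := nesym n13.
have n32 := nesym n23.
have [V0 [R0a [R0b [R0c [R0d R0e]]]]] := Hsf p0 p1 p2 (conj n01 (conj n12 n02));
have [V1 [R1a [R1b [R1c [R1d R1e]]]]] := Hsf p0 p1 p3 (conj n01 (conj n13 n03));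
have [V2 [R2a [R2b [R2c [R2d R2e]]]]] := Hsf p0 p2 p3 (conj n02 (conj n23 n03));
have [V3 [R3a [R3b [R3c [R3d R3e]]]]] := Hsf p1 p2 p3 (conj n12 (conj n23 n13));
idtac.
have F1 : chi p0 p1 p3 = 1%Z by move: H0 R1a R1b R1c R1d R1e; clear -chi; lia.
have F3 : chi p1 p2 p3 = (-1)%Z by move: H1 R3a R3b R3c R3d R3e; clear -chi; lia.
have F0 : chi p0 p1 p2 = (-1)%Z by move: H2 R0a R0b R0c R0d R0e; clear -chi; lia.
case: V2 => F2; first [ move: F2 R2a R2b R2c R2d R2e; clear -chi; lia | exfalso ].
exact: (NI p1 p3 p2 n13 n32 n12 n10 n30 n20 ltac:(move: F1 R1a R1b R1c R1d R1e; clear -chi; lia) ltac:(move: F2 R2a R2b R2c R2d R2e; clear -chi; lia) ltac:(move: F0 R0a R0b R0c R0d R0e; clear -chi; lia)).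
Qed.

Lemma gI3 (E : Type) (chi : E -> E -> E -> Z) (Hsf : sign_function chi) (Hint : interiority chi) (Htr : transitivity chi)
  (p0 p1 p2 p3 : E)
  (n01 : p0 <> p1)
  (n02 : p0 <> p2)
  (n03 : p0 <> p3)
  (n12 : p1 <> p2)
  (n13 : p1 <> p3)
  (n23 : p2 <> p3)
  (NI : forall a b c, a <> b -> b <> c -> a <> c -> a <> p0 -> b <> p0 -> c <> p0 -> chi p0 a b = 1%Z -> chi p0 b c = 1%Z -> chi p0 c a = 1%Z -> False)
  (H0 : chi p1 p3 p0 = (-1)%Z)
  (H1 : chi p2 p1 p0 = (-1)%Z)
  (H2 : chi p2 p3 p1 = 1%Z) :
  chi p2 p3 p0 = (-1)%Z.
Proof.
have n10 := nesym n01.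
have n20 := nesym n02.
have n30 := nesym n03.
have n21 := nesym n12.
have n31 := nesym n13.
have n32 := nesym n23.
have [V0 [R0a [R0b [R0c [R0d R0e]]]]] := Hsf p0 p1 p2 (conj n01 (conj n12 n02));
have [V1 [R1a [R1b [R1c [R1d R1e]]]]] := Hsf p0 p1 p3 (conj n01 (conj n13 n03));
have [V2 [R2a [R2b [R2c [R2d R2e]]]]] := Hsf p0 p2 p3 (conj n02 (conj n23 n03));
have [V3 [R3a [R3b [R3c [R3d R3e]]]]] := Hsf p1 p2 p3 (conj n12 (conj n23 n13));
idtac.
have F1 : chi p0 p1 p3 = (-1)%Z by move: H0 R1a R1b R1c R1d R1e; clear -chi; lia.
have F0 : chi p0 p1 p2 = 1%Z by move: H1 R0a R0b R0c R0d R0e; clear -chi; lia.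
have F3 : chi p1 p2 p3 = 1%Z by move: H2 R3a R3b R3c R3d R3e; clear -chi; lia.
case: V2 => F2; first [ move: F2 R2a R2b R2c R2d R2e; clear -chi; lia | exfalso ].
exact: (NI p1 p2 p3 n12 n23 n13 n10 n20 n30 ltac:(move: F0 R0a R0b R0c R0d R0e; clear -chi; lia) ltac:(move: F2 R2a R2b R2c R2d R2e; clear -chi; lia) ltac:(move: F1 R1a R1b R1c R1d R1e; clear -chi; lia)).
Qed.

Lemma gT0 (E : Type) (chi : E -> E -> E -> Z) (Hsf : sign_function chi) (Hint : interiority chi) (Htr : transitivity chi)
  (p0 p1 p2 p3 p4 : E)
  (n01 : p0 <> p1)
  (n02 : p0 <> p2)
  (n03 : p0 <> p3)
  (n04 : p0 <> p4)
  (n12 : p1 <> p2)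
  (n13 : p1 <> p3)
  (n14 : p1 <> p4)
  (n23 : p2 <> p3)
  (n24 : p2 <> p4)
  (n34 : p3 <> p4)
  (NI : forall a b c, a <> b -> b <> c -> a <> c -> a <> p0 -> b <> p0 -> c <> p0 -> chi p0 a b = 1%Z -> chi p0 b c = 1%Z -> chi p0 c a = 1%Z -> False)
  (H0 : chi p1 p0 p2 = (-1)%Z)
  (H1 : chi p1 p0 p3 = (-1)%Z)
  (H2 : chi p1 p0 p4 = (-1)%Z)
  (H3 : chi p2 p3 p1 = 1%Z)
  (H4 : chi p3 p4 p1 = 1%Z) :
  chi p2 p4 p1 = 1%Z.
Proof.
have n10 := nesym n01.
have n20 := nesym n02.
have n30 := nesym n03.
have n40 := nesym n04.
have n21 := nesym n12.
have n31 := nesym n13.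
have n41 := nesym n14.
have n32 := nesym n23.
have n42 := nesym n24.
have n43 := nesym n34.
have [V0 [R0a [R0b [R0c [R0d R0e]]]]] := Hsf p0 p1 p2 (conj n01 (conj n12 n02));
have [V1 [R1a [R1b [R1c [R1d R1e]]]]] := Hsf p0 p1 p3 (conj n01 (conj n13 n03));
have [V2 [R2a [R2b [R2c [R2d R2e]]]]] := Hsf p0 p1 p4 (conj n01 (conj n14 n04));
have [V3 [R3a [R3b [R3c [R3d R3e]]]]] := Hsf p0 p2 p3 (conj n02 (conj n23 n03));
have [V4 [R4a [R4b [R4c [R4d R4e]]]]] := Hsf p0 p2 p4 (conj n02 (conj n24 n04));
have [V5 [R5a [R5b [R5c [R5d R5e]]]]] := Hsf p0 p3 p4 (conj n03 (conj n34 n04));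
have [V6 [R6a [R6b [R6c [R6d R6e]]]]] := Hsf p1 p2 p3 (conj n12 (conj n23 n13));
have [V7 [R7a [R7b [R7c [R7d R7e]]]]] := Hsf p1 p2 p4 (conj n12 (conj n24 n14));
have [V8 [R8a [R8b [R8c [R8d R8e]]]]] := Hsf p1 p3 p4 (conj n13 (conj n34 n14));
have [V9 [R9a [R9b [R9c [R9d R9e]]]]] := Hsf p2 p3 p4 (conj n23 (conj n34 n24));
idtac.
have F0 : chi p0 p1 p2 = 1%Z by move: H0 R0a R0b R0c R0d R0e; clear -chi; lia.
have F1 : chi p0 p1 p3 = 1%Z by move: H1 R1a R1b R1c R1d R1e; clear -chi; lia.
have F2 : chi p0 p1 p4 = 1%Z by move: H2 R2a R2b R2c R2d R2e; clear -chi; lia.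
have F6 : chi p1 p2 p3 = 1%Z by move: H3 R6a R6b R6c R6d R6e; clear -chi; lia.
have F8 : chi p1 p3 p4 = 1%Z by move: H4 R8a R8b R8c R8d R8e; clear -chi; lia.
case: V7 => F7; first [ move: F7 R7a R7b R7c R7d R7e; clear -chi; lia | exfalso ].
have F9 : chi p2 p3 p4 = 1%Z by move: (Hint p1 p2 p3 p4 n12 n13 n14 (conj n23 (conj n34 n24)) ltac:(move: F8 R8a R8b R8c R8d R8e; clear -chi; lia) ltac:(move: F7 R7a R7b R7c R7d R7e; clear -chi; lia) ltac:(move: F6 R6a R6b R6c R6d R6e; clear -chi; lia)) R9a R9b R9c R9d R9e; clear -chi; lia.
case: V3 => F3.
{
  have F4 : chi p0 p2 p4 = (-1)%Z by move: (Htr p3 p2 p0 p1 p4 n32 n30 n31 n34 n20 n21 n24 (conj n01 (conj n14 n04)) ltac:(move: F3 R3a R3b R3c R3d R3e; clear -chi; lia) ltac:(move: F6 R6a R6b R6c R6d R6e; clear -chi; lia) ltac:(move: F9 R9a R9b R9c R9d R9e; clear -chi; lia) ltac:(move: F0 R0a R0b R0c R0d R0e; clear -chi; lia) ltac:(move: F7 R7a R7b R7c R7d R7e; clear -chi; lia)) R4a R4b R4c R4d R4e; clear -chi; lia.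
  have F5 : chi p0 p3 p4 = (-1)%Z by case: V5 => F5; first [ exact F5 | exfalso; exact: (NI p2 p3 p4 n23 n34 n24 n20 n30 n40 ltac:(move: F3 R3a R3b R3c R3d R3e; clear -chi; lia) ltac:(move: F5 R5a R5b R5c R5d R5e; clear -chi; lia) ltac:(move: F4 R4a R4b R4c R4d R4e; clear -chi; lia)) ].
  move: (Htr p2 p4 p0 p1 p3 n24 n20 n21 n23 n40 n41 n43 (conj n01 (conj n13 n03)) ltac:(move: F4 R4a R4b R4c R4d R4e; clear -chi; lia) ltac:(move: F7 R7a R7b R7c R7d R7e; clear -chi; lia) ltac:(move: F9 R9a R9b R9c R9d R9e; clear -chi; lia) ltac:(move: F2 R2a R2b R2c R2d R2e; clear -chi; lia) ltac:(move: F8 R8a R8b R8c R8d R8e; clear -chi; lia)) F5 R5a R5b R5c R5d R5e; clear -chi; lia.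
}
{
  have F5 : chi p0 p3 p4 = (-1)%Z by case: V5 => F5; first [ exact F5 | exfalso; move: (Htr p4 p3 p0 p1 p2 n43 n40 n41 n42 n30 n31 n32 (conj n01 (conj n12 n02)) ltac:(move: F5 R5a R5b R5c R5d R5e; clear -chi; lia) ltac:(move: F8 R8a R8b R8c R8d R8e; clear -chi; lia) ltac:(move: F9 R9a R9b R9c R9d R9e; clear -chi; lia) ltac:(move: F1 R1a R1b R1c R1d R1e; clear -chi; lia) ltac:(move: F6 R6a R6b R6c R6d R6e; clear -chi; lia)) F3 R3a R3b R3c R3d R3e; clear -chi; lia ].
  have F4 : chi p0 p2 p4 = (-1)%Z by case: V4 => F4; first [ exact F4 | exfalso; exact: (NI p2 p4 p3 n24 n43 n23 n20 n40 n30 ltac:(move: F4 R4a R4b R4c R4d R4e; clear -chi; lia) ltac:(move: F5 R5a R5b R5c R5d R5e; clear -chi; lia) ltac:(move: F3 R3a R3b R3c R3d R3e; clear -chi; lia)) ].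
  move: (Htr p2 p4 p0 p1 p3 n24 n20 n21 n23 n40 n41 n43 (conj n01 (conj n13 n03)) ltac:(move: F4 R4a R4b R4c R4d R4e; clear -chi; lia) ltac:(move: F7 R7a R7b R7c R7d R7e; clear -chi; lia) ltac:(move: F9 R9a R9b R9c R9d R9e; clear -chi; lia) ltac:(move: F2 R2a R2b R2c R2d R2e; clear -chi; lia) ltac:(move: F8 R8a R8b R8c R8d R8e; clear -chi; lia)) F5 R5a R5b R5c R5d R5e; clear -chi; lia.
}
Qed.

Lemma gT1 (E : Type) (chi : E -> E -> E -> Z) (Hsf : sign_function chi) (Hint : interiority chi) (Htr : transitivity chi)
  (p0 p1 p2 p3 p4 : E)
  (n01 : p0 <> p1)
  (n02 : p0 <> p2)
  (n03 : p0 <> p3)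
  (n04 : p0 <> p4)
  (n12 : p1 <> p2)
  (n13 : p1 <> p3)
  (n14 : p1 <> p4)
  (n23 : p2 <> p3)
  (n24 : p2 <> p4)
  (n34 : p3 <> p4)
  (NI : forall a b c, a <> b -> b <> c -> a <> c -> a <> p0 -> b <> p0 -> c <> p0 -> chi p0 a b = 1%Z -> chi p0 b c = 1%Z -> chi p0 c a = 1%Z -> False)
  (H0 : chi p0 p1 p2 = (-1)%Z)
  (H1 : chi p0 p1 p3 = (-1)%Z)
  (H2 : chi p0 p1 p4 = (-1)%Z)
  (H3 : chi p2 p3 p0 = (-1)%Z)
  (H4 : chi p3 p4 p0 = (-1)%Z) :
  chi p2 p4 p0 = (-1)%Z.
Proof.
have n10 := nesym n01.
have n20 := nesym n02.
have n30 := nesym n03.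
have n40 := nesym n04.
have n21 := nesym n12.
have n31 := nesym n13.
have n41 := nesym n14.
have n32 := nesym n23.
have n42 := nesym n24.
have n43 := nesym n34.
have [V0 [R0a [R0b [R0c [R0d R0e]]]]] := Hsf p0 p1 p2 (conj n01 (conj n12 n02));
have [V1 [R1a [R1b [R1c [R1d R1e]]]]] := Hsf p0 p1 p3 (conj n01 (conj n13 n03));
have [V2 [R2a [R2b [R2c [R2d R2e]]]]] := Hsf p0 p1 p4 (conj n01 (conj n14 n04));
have [V3 [R3a [R3b [R3c [R3d R3e]]]]] := Hsf p0 p2 p3 (conj n02 (conj n23 n03));
have [V4 [R4a [R4b [R4c [R4d R4e]]]]] := Hsf p0 p2 p4 (conj n02 (conj n24 n04));
have [V5 [R5a [R5b [R5c [R5d R5e]]]]] := Hsf p0 p3 p4 (conj n03 (conj n34 n04));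
have [V6 [R6a [R6b [R6c [R6d R6e]]]]] := Hsf p1 p2 p3 (conj n12 (conj n23 n13));
have [V7 [R7a [R7b [R7c [R7d R7e]]]]] := Hsf p1 p2 p4 (conj n12 (conj n24 n14));
have [V8 [R8a [R8b [R8c [R8d R8e]]]]] := Hsf p1 p3 p4 (conj n13 (conj n34 n14));
have [V9 [R9a [R9b [R9c [R9d R9e]]]]] := Hsf p2 p3 p4 (conj n23 (conj n34 n24));
idtac.
have F0 : chi p0 p1 p2 = (-1)%Z by move: H0 R0a R0b R0c R0d R0e; clear -chi; lia.
have F1 : chi p0 p1 p3 = (-1)%Z by move: H1 R1a R1b R1c R1d R1e; clear -chi; lia.
have F2 : chi p0 p1 p4 = (-1)%Z by move: H2 R2a R2b R2c R2d R2e; clear -chi; lia.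
have F3 : chi p0 p2 p3 = (-1)%Z by move: H3 R3a R3b R3c R3d R3e; clear -chi; lia.
have F5 : chi p0 p3 p4 = (-1)%Z by move: H4 R5a R5b R5c R5d R5e; clear -chi; lia.
case: V4 => F4; first [ move: F4 R4a R4b R4c R4d R4e; clear -chi; lia | exfalso ].
have F9 : chi p2 p3 p4 = (-1)%Z by move: (Hint p0 p2 p4 p3 n02 n04 n03 (conj n24 (conj n43 n23)) ltac:(move: F5 R5a R5b R5c R5d R5e; clear -chi; lia) ltac:(move: F3 R3a R3b R3c R3d R3e; clear -chi; lia) ltac:(move: F4 R4a R4b R4c R4d R4e; clear -chi; lia)) R9a R9b R9c R9d R9e; clear -chi; lia.
exact: (NI p2 p4 p3 n24 n43 n23 n20 n40 n30 ltac:(move: F4 R4a R4b R4c R4d R4e; clear -chi; lia) ltac:(move: F5 R5a R5b R5c R5d R5e; clear -chi; lia) ltac:(move: F3 R3a R3b R3c R3d R3e; clear -chi; lia)).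
Qed.

Lemma gT2 (E : Type) (chi : E -> E -> E -> Z) (Hsf : sign_function chi) (Hint : interiority chi) (Htr : transitivity chi)
  (p0 p1 p2 p3 p4 : E)
  (n01 : p0 <> p1)
  (n02 : p0 <> p2)
  (n03 : p0 <> p3)
  (n04 : p0 <> p4)
  (n12 : p1 <> p2)
  (n13 : p1 <> p3)
  (n14 : p1 <> p4)
  (n23 : p2 <> p3)
  (n24 : p2 <> p4)
  (n34 : p3 <> p4)
  (NI : forall a b c, a <> b -> b <> c -> a <> c -> a <> p0 -> b <> p0 -> c <> p0 -> chi p0 a b = 1%Z -> chi p0 b c = 1%Z -> chi p0 c a = 1%Z -> False)
  (H0 : chi p2 p1 p0 = (-1)%Z)
  (H1 : chi p2 p1 p3 = 1%Z)
  (H2 : chi p2 p1 p4 = 1%Z)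
  (H3 : chi p0 p3 p2 = (-1)%Z)
  (H4 : chi p3 p4 p2 = 1%Z) :
  chi p0 p4 p2 = (-1)%Z.
Proof.
have n10 := nesym n01.
have n20 := nesym n02.
have n30 := nesym n03.
have n40 := nesym n04.
have n21 := nesym n12.
have n31 := nesym n13.
have n41 := nesym n14.
have n32 := nesym n23.
have n42 := nesym n24.
have n43 := nesym n34.
have [V0 [R0a [R0b [R0c [R0d R0e]]]]] := Hsf p0 p1 p2 (conj n01 (conj n12 n02));
have [V1 [R1a [R1b [R1c [R1d R1e]]]]] := Hsf p0 p1 p3 (conj n01 (conj n13 n03));
have [V2 [R2a [R2b [R2c [R2d R2e]]]]] := Hsf p0 p1 p4 (conj n01 (conj n14 n04));
have [V3 [R3a [R3b [R3c [R3d R3e]]]]] := Hsf p0 p2 p3 (conj n02 (conj n23 n03));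
have [V4 [R4a [R4b [R4c [R4d R4e]]]]] := Hsf p0 p2 p4 (conj n02 (conj n24 n04));
have [V5 [R5a [R5b [R5c [R5d R5e]]]]] := Hsf p0 p3 p4 (conj n03 (conj n34 n04));
have [V6 [R6a [R6b [R6c [R6d R6e]]]]] := Hsf p1 p2 p3 (conj n12 (conj n23 n13));
have [V7 [R7a [R7b [R7c [R7d R7e]]]]] := Hsf p1 p2 p4 (conj n12 (conj n24 n14));
have [V8 [R8a [R8b [R8c [R8d R8e]]]]] := Hsf p1 p3 p4 (conj n13 (conj n34 n14));
have [V9 [R9a [R9b [R9c [R9d R9e]]]]] := Hsf p2 p3 p4 (conj n23 (conj n34 n24));
idtac.
have F0 : chi p0 p1 p2 = 1%Z by move: H0 R0a R0b R0c R0d R0e; clear -chi; lia.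
have F6 : chi p1 p2 p3 = (-1)%Z by move: H1 R6a R6b R6c R6d R6e; clear -chi; lia.
have F7 : chi p1 p2 p4 = (-1)%Z by move: H2 R7a R7b R7c R7d R7e; clear -chi; lia.
have F3 : chi p0 p2 p3 = 1%Z by move: H3 R3a R3b R3c R3d R3e; clear -chi; lia.
have F9 : chi p2 p3 p4 = 1%Z by move: H4 R9a R9b R9c R9d R9e; clear -chi; lia.
case: V4 => F4; first [ move: F4 R4a R4b R4c R4d R4e; clear -chi; lia | exfalso ].
have F1 : chi p0 p1 p3 = 1%Z by case: V1 => F1; first [ exact F1 | exfalso; move: (Hint p0 p1 p2 p3 n01 n02 n03 (conj n12 (conj n23 n13)) ltac:(move: F3 R3a R3b R3c R3d R3e; clear -chi; lia) ltac:(move: F1 R1a R1b R1c R1d R1e; clear -chi; lia) ltac:(move: F0 R0a R0b R0c R0d R0e; clear -chi; lia)) F6 R6a R6b R6c R6d R6e; clear -chi; lia ].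
have F5 : chi p0 p3 p4 = (-1)%Z by case: V5 => F5; first [ exact F5 | exfalso; exact: (NI p2 p3 p4 n23 n34 n24 n20 n30 n40 ltac:(move: F3 R3a R3b R3c R3d R3e; clear -chi; lia) ltac:(move: F5 R5a R5b R5c R5d R5e; clear -chi; lia) ltac:(move: F4 R4a R4b R4c R4d R4e; clear -chi; lia)) ].
have F8 : chi p1 p3 p4 = 1%Z by case: V8 => F8; first [ exact F8 | exfalso; move: (Htr p0 p3 p1 p4 p2 n03 n01 n04 n02 n31 n34 n32 (conj n14 (conj n42 n12)) ltac:(move: F1 R1a R1b R1c R1d R1e; clear -chi; lia) ltac:(move: F5 R5a R5b R5c R5d R5e; clear -chi; lia) ltac:(move: F3 R3a R3b R3c R3d R3e; clear -chi; lia) ltac:(move: F8 R8a R8b R8c R8d R8e; clear -chi; lia) ltac:(move: F9 R9a R9b R9c R9d R9e; clear -chi; lia)) F6 R6a R6b R6c R6d R6e; clear -chi; lia ].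
have F2 : chi p0 p1 p4 = (-1)%Z by case: V2 => F2; first [ exact F2 | exfalso; move: (Htr p2 p4 p0 p1 p3 n24 n20 n21 n23 n40 n41 n43 (conj n01 (conj n13 n03)) ltac:(move: F4 R4a R4b R4c R4d R4e; clear -chi; lia) ltac:(move: F7 R7a R7b R7c R7d R7e; clear -chi; lia) ltac:(move: F9 R9a R9b R9c R9d R9e; clear -chi; lia) ltac:(move: F2 R2a R2b R2c R2d R2e; clear -chi; lia) ltac:(move: F8 R8a R8b R8c R8d R8e; clear -chi; lia)) F5 R5a R5b R5c R5d R5e; clear -chi; lia ].
move: (Htr p3 p1 p0 p4 p2 n31 n30 n34 n32 n10 n14 n12 (conj n04 (conj n42 n02)) ltac:(move: F1 R1a R1b R1c R1d R1e; clear -chi; lia) ltac:(move: F8 R8a R8b R8c R8d R8e; clear -chi; lia) ltac:(move: F6 R6a R6b R6c R6d R6e; clear -chi; lia) ltac:(move: F2 R2a R2b R2c R2d R2e; clear -chi; lia) ltac:(move: F7 R7a R7b R7c R7d R7e; clear -chi; lia)) F0 R0a R0b R0c R0d R0e; clear -chi; lia.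
Qed.

Lemma gT3 (E : Type) (chi : E -> E -> E -> Z) (Hsf : sign_function chi) (Hint : interiority chi) (Htr : transitivity chi)
  (p0 p1 p2 p3 p4 : E)
  (n01 : p0 <> p1)
  (n02 : p0 <> p2)
  (n03 : p0 <> p3)
  (n04 : p0 <> p4)
  (n12 : p1 <> p2)
  (n13 : p1 <> p3)
  (n14 : p1 <> p4)
  (n23 : p2 <> p3)
  (n24 : p2 <> p4)
  (n34 : p3 <> p4)
  (NI : forall a b c, a <> b -> b <> c -> a <> c -> a <> p0 -> b <> p0 -> c <> p0 -> chi p0 a b = 1%Z -> chi p0 b c = 1%Z -> chi p0 c a = 1%Z -> False)
  (H0 : chi p2 p1 p3 = 1%Z)
  (H1 : chi p2 p1 p0 = (-1)%Z)
  (H2 : chi p2 p1 p4 = 1%Z)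
  (H3 : chi p3 p0 p2 = (-1)%Z)
  (H4 : chi p0 p4 p2 = (-1)%Z) :
  chi p3 p4 p2 = 1%Z.
Proof.
have n10 := nesym n01.
have n20 := nesym n02.
have n30 := nesym n03.
have n40 := nesym n04.
have n21 := nesym n12.
have n31 := nesym n13.
have n41 := nesym n14.
have n32 := nesym n23.
have n42 := nesym n24.
have n43 := nesym n34.
have [V0 [R0a [R0b [R0c [R0d R0e]]]]] := Hsf p0 p1 p2 (conj n01 (conj n12 n02));
have [V1 [R1a [R1b [R1c [R1d R1e]]]]] := Hsf p0 p1 p3 (conj n01 (conj n13 n03));
have [V2 [R2a [R2b [R2c [R2d R2e]]]]] := Hsf p0 p1 p4 (conj n01 (conj n14 n04));
have [V3 [R3a [R3b [R3c [R3d R3e]]]]] := Hsf p0 p2 p3 (conj n02 (conj n23 n03));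
have [V4 [R4a [R4b [R4c [R4d R4e]]]]] := Hsf p0 p2 p4 (conj n02 (conj n24 n04));
have [V5 [R5a [R5b [R5c [R5d R5e]]]]] := Hsf p0 p3 p4 (conj n03 (conj n34 n04));
have [V6 [R6a [R6b [R6c [R6d R6e]]]]] := Hsf p1 p2 p3 (conj n12 (conj n23 n13));
have [V7 [R7a [R7b [R7c [R7d R7e]]]]] := Hsf p1 p2 p4 (conj n12 (conj n24 n14));
have [V8 [R8a [R8b [R8c [R8d R8e]]]]] := Hsf p1 p3 p4 (conj n13 (conj n34 n14));
have [V9 [R9a [R9b [R9c [R9d R9e]]]]] := Hsf p2 p3 p4 (conj n23 (conj n34 n24));
idtac.
have F6 : chi p1 p2 p3 = (-1)%Z by move: H0 R6a R6b R6c R6d R6e; clear -chi; lia.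
have F0 : chi p0 p1 p2 = 1%Z by move: H1 R0a R0b R0c R0d R0e; clear -chi; lia.
have F7 : chi p1 p2 p4 = (-1)%Z by move: H2 R7a R7b R7c R7d R7e; clear -chi; lia.
have F3 : chi p0 p2 p3 = (-1)%Z by move: H3 R3a R3b R3c R3d R3e; clear -chi; lia.
have F4 : chi p0 p2 p4 = 1%Z by move: H4 R4a R4b R4c R4d R4e; clear -chi; lia.
case: V9 => F9; first [ move: F9 R9a R9b R9c R9d R9e; clear -chi; lia | exfalso ].
have F2 : chi p0 p1 p4 = 1%Z by case: V2 => F2; first [ exact F2 | exfalso; move: (Hint p0 p1 p2 p4 n01 n02 n04 (conj n12 (conj n24 n14)) ltac:(move: F4 R4a R4b R4c R4d R4e; clear -chi; lia) ltac:(move: F2 R2a R2b R2c R2d R2e; clear -chi; lia) ltac:(move: F0 R0a R0b R0c R0d R0e; clear -chi; lia)) F7 R7a R7b R7c R7d R7e; clear -chi; lia ].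
have F5 : chi p0 p3 p4 = 1%Z by case: V5 => F5; first [ exact F5 | exfalso; exact: (NI p2 p4 p3 n24 n43 n23 n20 n40 n30 ltac:(move: F4 R4a R4b R4c R4d R4e; clear -chi; lia) ltac:(move: F5 R5a R5b R5c R5d R5e; clear -chi; lia) ltac:(move: F3 R3a R3b R3c R3d R3e; clear -chi; lia)) ].
have F8 : chi p1 p3 p4 = (-1)%Z by case: V8 => F8; first [ exact F8 | exfalso; move: (Htr p0 p4 p1 p3 p2 n04 n01 n03 n02 n41 n43 n42 (conj n13 (conj n32 n12)) ltac:(move: F2 R2a R2b R2c R2d R2e; clear -chi; lia) ltac:(move: F5 R5a R5b R5c R5d R5e; clear -chi; lia) ltac:(move: F4 R4a R4b R4c R4d R4e; clear -chi; lia) ltac:(move: F8 R8a R8b R8c R8d R8e; clear -chi; lia) ltac:(move: F9 R9a R9b R9c R9d R9e; clear -chi; lia)) F7 R7a R7b R7c R7d R7e; clear -chi; lia ].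
have F1 : chi p0 p1 p3 = (-1)%Z by case: V1 => F1; first [ exact F1 | exfalso; move: (Htr p2 p3 p0 p1 p4 n23 n20 n21 n24 n30 n31 n34 (conj n01 (conj n14 n04)) ltac:(move: F3 R3a R3b R3c R3d R3e; clear -chi; lia) ltac:(move: F6 R6a R6b R6c R6d R6e; clear -chi; lia) ltac:(move: F9 R9a R9b R9c R9d R9e; clear -chi; lia) ltac:(move: F1 R1a R1b R1c R1d R1e; clear -chi; lia) ltac:(move: F8 R8a R8b R8c R8d R8e; clear -chi; lia)) F5 R5a R5b R5c R5d R5e; clear -chi; lia ].
move: (Htr p4 p1 p0 p3 p2 n41 n40 n43 n42 n10 n13 n12 (conj n03 (conj n32 n02)) ltac:(move: F2 R2a R2b R2c R2d R2e; clear -chi; lia) ltac:(move: F8 R8a R8b R8c R8d R8e; clear -chi; lia) ltac:(move: F7 R7a R7b R7c R7d R7e; clear -chi; lia) ltac:(move: F1 R1a R1b R1c R1d R1e; clear -chi; lia) ltac:(move: F6 R6a R6b R6c R6d R6e; clear -chi; lia)) F0 R0a R0b R0c R0d R0e; clear -chi; lia.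
Qed.

Lemma gT4 (E : Type) (chi : E -> E -> E -> Z) (Hsf : sign_function chi) (Hint : interiority chi) (Htr : transitivity chi)
  (p0 p1 p2 p3 p4 : E)
  (n01 : p0 <> p1)
  (n02 : p0 <> p2)
  (n03 : p0 <> p3)
  (n04 : p0 <> p4)
  (n12 : p1 <> p2)
  (n13 : p1 <> p3)
  (n14 : p1 <> p4)
  (n23 : p2 <> p3)
  (n24 : p2 <> p4)
  (n34 : p3 <> p4)
  (NI : forall a b c, a <> b -> b <> c -> a <> c -> a <> p0 -> b <> p0 -> c <> p0 -> chi p0 a b = 1%Z -> chi p0 b c = 1%Z -> chi p0 c a = 1%Z -> False)
  (H0 : chi p2 p1 p3 = 1%Z)
  (H1 : chi p2 p1 p4 = 1%Z)
  (H2 : chi p2 p1 p0 = (-1)%Z)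
  (H3 : chi p3 p4 p2 = 1%Z)
  (H4 : chi p4 p0 p2 = (-1)%Z) :
  chi p3 p0 p2 = (-1)%Z.
Proof.
have n10 := nesym n01.
have n20 := nesym n02.
have n30 := nesym n03.
have n40 := nesym n04.
have n21 := nesym n12.
have n31 := nesym n13.
have n41 := nesym n14.
have n32 := nesym n23.
have n42 := nesym n24.
have n43 := nesym n34.
have [V0 [R0a [R0b [R0c [R0d R0e]]]]] := Hsf p0 p1 p2 (conj n01 (conj n12 n02));
have [V1 [R1a [R1b [R1c [R1d R1e]]]]] := Hsf p0 p1 p3 (conj n01 (conj n13 n03));
have [V2 [R2a [R2b [R2c [R2d R2e]]]]] := Hsf p0 p1 p4 (conj n01 (conj n14 n04));
have [V3 [R3a [R3b [R3c [R3d R3e]]]]] := Hsf p0 p2 p3 (conj n02 (conj n23 n03));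
have [V4 [R4a [R4b [R4c [R4d R4e]]]]] := Hsf p0 p2 p4 (conj n02 (conj n24 n04));
have [V5 [R5a [R5b [R5c [R5d R5e]]]]] := Hsf p0 p3 p4 (conj n03 (conj n34 n04));
have [V6 [R6a [R6b [R6c [R6d R6e]]]]] := Hsf p1 p2 p3 (conj n12 (conj n23 n13));
have [V7 [R7a [R7b [R7c [R7d R7e]]]]] := Hsf p1 p2 p4 (conj n12 (conj n24 n14));
have [V8 [R8a [R8b [R8c [R8d R8e]]]]] := Hsf p1 p3 p4 (conj n13 (conj n34 n14));
have [V9 [R9a [R9b [R9c [R9d R9e]]]]] := Hsf p2 p3 p4 (conj n23 (conj n34 n24));
idtac.
have F6 : chi p1 p2 p3 = (-1)%Z by move: H0 R6a R6b R6c R6d R6e; clear -chi; lia.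
have F7 : chi p1 p2 p4 = (-1)%Z by move: H1 R7a R7b R7c R7d R7e; clear -chi; lia.
have F0 : chi p0 p1 p2 = 1%Z by move: H2 R0a R0b R0c R0d R0e; clear -chi; lia.
have F9 : chi p2 p3 p4 = 1%Z by move: H3 R9a R9b R9c R9d R9e; clear -chi; lia.
have F4 : chi p0 p2 p4 = (-1)%Z by move: H4 R4a R4b R4c R4d R4e; clear -chi; lia.
case: V3 => F3; first [ move: F3 R3a R3b R3c R3d R3e; clear -chi; lia | exfalso ].
have F1 : chi p0 p1 p3 = 1%Z by case: V1 => F1; first [ exact F1 | exfalso; move: (Hint p0 p1 p2 p3 n01 n02 n03 (conj n12 (conj n23 n13)) ltac:(move: F3 R3a R3b R3c R3d R3e; clear -chi; lia) ltac:(move: F1 R1a R1b R1c R1d R1e; clear -chi; lia) ltac:(move: F0 R0a R0b R0c R0d R0e; clear -chi; lia)) F6 R6a R6b R6c R6d R6e; clear -chi; lia ].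
have F5 : chi p0 p3 p4 = (-1)%Z by case: V5 => F5; first [ exact F5 | exfalso; exact: (NI p2 p3 p4 n23 n34 n24 n20 n30 n40 ltac:(move: F3 R3a R3b R3c R3d R3e; clear -chi; lia) ltac:(move: F5 R5a R5b R5c R5d R5e; clear -chi; lia) ltac:(move: F4 R4a R4b R4c R4d R4e; clear -chi; lia)) ].
have F8 : chi p1 p3 p4 = 1%Z by case: V8 => F8; first [ exact F8 | exfalso; move: (Htr p0 p3 p1 p4 p2 n03 n01 n04 n02 n31 n34 n32 (conj n14 (conj n42 n12)) ltac:(move: F1 R1a R1b R1c R1d R1e; clear -chi; lia) ltac:(move: F5 R5a R5b R5c R5d R5e; clear -chi; lia) ltac:(move: F3 R3a R3b R3c R3d R3e; clear -chi; lia) ltac:(move: F8 R8a R8b R8c R8d R8e; clear -chi; lia) ltac:(move: F9 R9a R9b R9c R9d R9e; clear -chi; lia)) F6 R6a R6b R6c R6d R6e; clear -chi; lia ].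
have F2 : chi p0 p1 p4 = (-1)%Z by case: V2 => F2; first [ exact F2 | exfalso; move: (Htr p2 p4 p0 p1 p3 n24 n20 n21 n23 n40 n41 n43 (conj n01 (conj n13 n03)) ltac:(move: F4 R4a R4b R4c R4d R4e; clear -chi; lia) ltac:(move: F7 R7a R7b R7c R7d R7e; clear -chi; lia) ltac:(move: F9 R9a R9b R9c R9d R9e; clear -chi; lia) ltac:(move: F2 R2a R2b R2c R2d R2e; clear -chi; lia) ltac:(move: F8 R8a R8b R8c R8d R8e; clear -chi; lia)) F5 R5a R5b R5c R5d R5e; clear -chi; lia ].
move: (Htr p3 p1 p0 p4 p2 n31 n30 n34 n32 n10 n14 n12 (conj n04 (conj n42 n02)) ltac:(move: F1 R1a R1b R1c R1d R1e; clear -chi; lia) ltac:(move: F8 R8a R8b R8c R8d R8e; clear -chi; lia) ltac:(move: F6 R6a R6b R6c R6d R6e; clear -chi; lia) ltac:(move: F2 R2a R2b R2c R2d R2e; clear -chi; lia) ltac:(move: F7 R7a R7b R7c R7d R7e; clear -chi; lia)) F0 R0a R0b R0c R0d R0e; clear -chi; lia.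
Qed.



Ltac neq := let E := fresh "E" in move=> E; match goal with H : _ <> _ |- _ => by apply: H; rewrite ?E end.

Section Main.
Variable X : finType.
Variable chi : option X -> option X -> option X -> Z.
Hypothesis Hsf : sign_function chi.
Hypothesis Hint : interiority chi.
Hypothesis Htr : transitivity chi.
Hypothesis Hext : extreme chi None.

Lemma twist_some a b c : a <> None -> b <> None -> c <> None -> twist chi a b c = chi a b c.
Proof. by case: a => // a; case: b => // b; case: c. Qed.

Lemma twist_none a b c : a = None \/ b = None \/ c = None -> twist chi a b c = (- chi a b c)%Z.
Proof. by case: a => [a|]; case: b => [b|]; case: c => [c|] //= [|[|]]. Qed.

Lemma sf_twist : sign_function (twist chi).
Proof.
move=> x y z D.
have [[e1|e1] [e2 [e3 [e4 [e5 e6]]]]] := Hsf D; case: D => [xy [yz xz]];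
move: xy yz xz e1 e2 e3 e4 e5 e6;
case: x => [x|]; case: y => [y|]; case: z => [z|];
 rewrite /twist => xy yz xz; try congruence; lia.
Qed.

Lemma noinside_chi a b c : a <> b -> b <> c -> a <> c -> a <> None -> b <> None -> c <> None ->
  chi None a b = 1%Z -> chi None b c = 1%Z -> chi None c a = 1%Z -> False.
Proof.
move=> ab bc ac aN bN cN h1 h2 h3.
have [w [wN Hc]] := Hext.
have [_ [_ [_ [_ [_ e1]]]]] := Hsf (x:=None) (y:=c) (z:=a) (ltac:(split; [|split]; congruence)).
have [_ [_ [_ [_ [_ e2]]]]] := Hsf (x:=None) (y:=a) (z:=b) (ltac:(split; [|split]; congruence)).
have [_ [_ [_ [_ [_ e3]]]]] := Hsf (x:=None) (y:=b) (z:=c) (ltac:(split; [|split]; congruence)).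
case: (eqVneq w a) => [Ew|wa].
  subst w; have := Hc b c ltac:(neq) ltac:(neq) ltac:(neq) ltac:(neq); lia.
case: (eqVneq w b) => [Ew|wb].
  subst w; have := Hc c a ltac:(neq) ltac:(neq) ltac:(neq) ltac:(neq); lia.
case: (eqVneq w c) => [Ew|wc].
  subst w; have := Hc a b ltac:(neq) ltac:(neq) ltac:(neq) ltac:(neq); lia.
move/eqP: wa => wa; move/eqP: wb => wb; move/eqP: wc => wc.
have [[v|v] _] := Hsf (x:=None) (y:=w) (z:=a) (ltac:(split; [|split]; congruence)).
- have vb : chi None w b = 1%Z by rewrite -(Hc a b) //; congruence.
  have vc : chi None w c = 1%Z by rewrite -(Hc a c) //; congruence.
  exact: (@gA1 _ chi Hsf Hint Htr None w a b c ltac:(neq) ltac:(neq) ltac:(neq) ltac:(neq)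
    ltac:(neq) ltac:(neq) ltac:(neq) ltac:(neq) ltac:(neq) ltac:(neq)
    h1 h2 h3 v vb vc).
- have vb : chi None w b = (-1)%Z by rewrite -(Hc a b) //; congruence.
  have vc : chi None w c = (-1)%Z by rewrite -(Hc a c) //; congruence.
  exact: (@gA2 _ chi Hsf Hint Htr None w a b c ltac:(neq) ltac:(neq) ltac:(neq) ltac:(neq)
    ltac:(neq) ltac:(neq) ltac:(neq) ltac:(neq) ltac:(neq) ltac:(neq)
    h1 h2 h3 v vb vc).
Qed.

Lemma twist_val a b c : twist chi a b c =
  if (a == None) || (b == None) || (c == None) then (- chi a b c)%Z else chi a b c.
Proof. by case: a => [a|]; case: b => [b|]; case: c => [c|]. Qed.

Lemma int_twist : interiority (twist chi).
Proof.
move=> t x y z tx ty tz [xy [yz xz]] h1 h2 h3.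
have NI := noinside_chi.
rewrite !twist_val in h1 h2 h3 *.
case: (classic (t = None)) => [Et|tN].
  subst t.
  have xN' : (x == None) = false by apply/negbTE/eqP; neq.
  have yN' : (y == None) = false by apply/negbTE/eqP; neq.
  have zN' : (z == None) = false by apply/negbTE/eqP; neq.
  rewrite ?eqxx ?xN' ?yN' ?zN' /= in h1 h2 h3 *.
  have := (@gI0 _ chi Hsf Hint Htr None x y z ltac:(neq) ltac:(neq) ltac:(neq) ltac:(neq) ltac:(neq) ltac:(neq) NI ltac:(lia) ltac:(lia) ltac:(lia)); lia.
case: (classic (x = None)) => [Ex|xN].
  subst x.
  have tN' : (t == None) = false by apply/negbTE/eqP; neq.
  have yN' : (y == None) = false by apply/negbTE/eqP; neq.
  have zN' : (z == None) = false by apply/negbTE/eqP; neq.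
  rewrite ?eqxx ?tN' ?yN' ?zN' /= in h1 h2 h3 *.
  have := (@gI1 _ chi Hsf Hint Htr None t y z ltac:(neq) ltac:(neq) ltac:(neq) ltac:(neq) ltac:(neq) ltac:(neq) NI ltac:(lia) ltac:(lia) ltac:(lia)); lia.
case: (classic (y = None)) => [Ey|yN].
  subst y.
  have tN' : (t == None) = false by apply/negbTE/eqP; neq.
  have xN' : (x == None) = false by apply/negbTE/eqP; neq.
  have zN' : (z == None) = false by apply/negbTE/eqP; neq.
  rewrite ?eqxx ?tN' ?xN' ?zN' /= in h1 h2 h3 *.
  have := (@gI2 _ chi Hsf Hint Htr None t x z ltac:(neq) ltac:(neq) ltac:(neq) ltac:(neq) ltac:(neq) ltac:(neq) NI ltac:(lia) ltac:(lia) ltac:(lia)); lia.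
case: (classic (z = None)) => [Ez|zN].
  subst z.
  have tN' : (t == None) = false by apply/negbTE/eqP; neq.
  have xN' : (x == None) = false by apply/negbTE/eqP; neq.
  have yN' : (y == None) = false by apply/negbTE/eqP; neq.
  rewrite ?eqxx ?tN' ?xN' ?yN' /= in h1 h2 h3 *.
  have := (@gI3 _ chi Hsf Hint Htr None t x y ltac:(neq) ltac:(neq) ltac:(neq) ltac:(neq) ltac:(neq) ltac:(neq) NI ltac:(lia) ltac:(lia) ltac:(lia)); lia.
have {tN}tN : (t == None) = false by apply/negbTE/eqP. have {xN}xN : (x == None) = false by apply/negbTE/eqP. have {yN}yN : (y == None) = false by apply/negbTE/eqP. have {zN}zN : (z == None) = false by apply/negbTE/eqP.
rewrite tN xN yN zN /= in h1 h2 h3 *.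
exact: (Hint tx ty tz (conj xy (conj yz xz)) h1 h2 h3).
Qed.

Lemma tr_twist : transitivity (twist chi).
Proof.
move=> s t x y z st sx sy sz tx ty tz [xy [yz xz]] h1 h2 h3 h4 h5.
have NI := noinside_chi.
rewrite !twist_val in h1 h2 h3 h4 h5 *.
case: (classic (s = None)) => [Es|sN].
  subst s.
  have tN' : (t == None) = false by apply/negbTE/eqP; neq.
  have xN' : (x == None) = false by apply/negbTE/eqP; neq.
  have yN' : (y == None) = false by apply/negbTE/eqP; neq.
  have zN' : (z == None) = false by apply/negbTE/eqP; neq.
  rewrite ?eqxx ?tN' ?xN' ?yN' ?zN' /= in h1 h2 h3 h4 h5 *.
  have := (@gT0 _ chi Hsf Hint Htr None t x y z ltac:(neq) ltac:(neq) ltac:(neq) ltac:(neq) ltac:(neq) ltac:(neq) ltac:(neq) ltac:(neq) ltac:(neq) ltac:(neq) NI ltac:(lia) ltac:(lia) ltac:(lia) ltac:(lia) ltac:(lia)); lia.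
case: (classic (t = None)) => [Et|tN].
  subst t.
  have sN' : (s == None) = false by apply/negbTE/eqP; neq.
  have xN' : (x == None) = false by apply/negbTE/eqP; neq.
  have yN' : (y == None) = false by apply/negbTE/eqP; neq.
  have zN' : (z == None) = false by apply/negbTE/eqP; neq.
  rewrite ?eqxx ?sN' ?xN' ?yN' ?zN' /= in h1 h2 h3 h4 h5 *.
  have := (@gT1 _ chi Hsf Hint Htr None s x y z ltac:(neq) ltac:(neq) ltac:(neq) ltac:(neq) ltac:(neq) ltac:(neq) ltac:(neq) ltac:(neq) ltac:(neq) ltac:(neq) NI ltac:(lia) ltac:(lia) ltac:(lia) ltac:(lia) ltac:(lia)); lia.
case: (classic (x = None)) => [Ex|xN].
  subst x.
  have sN' : (s == None) = false by apply/negbTE/eqP; neq.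
  have tN' : (t == None) = false by apply/negbTE/eqP; neq.
  have yN' : (y == None) = false by apply/negbTE/eqP; neq.
  have zN' : (z == None) = false by apply/negbTE/eqP; neq.
  rewrite ?eqxx ?sN' ?tN' ?yN' ?zN' /= in h1 h2 h3 h4 h5 *.
  have := (@gT2 _ chi Hsf Hint Htr None s t y z ltac:(neq) ltac:(neq) ltac:(neq) ltac:(neq) ltac:(neq) ltac:(neq) ltac:(neq) ltac:(neq) ltac:(neq) ltac:(neq) NI ltac:(lia) ltac:(lia) ltac:(lia) ltac:(lia) ltac:(lia)); lia.
case: (classic (y = None)) => [Ey|yN].
  subst y.
  have sN' : (s == None) = false by apply/negbTE/eqP; neq.
  have tN' : (t == None) = false by apply/negbTE/eqP; neq.
  have xN' : (x == None) = false by apply/negbTE/eqP; neq.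
  have zN' : (z == None) = false by apply/negbTE/eqP; neq.
  rewrite ?eqxx ?sN' ?tN' ?xN' ?zN' /= in h1 h2 h3 h4 h5 *.
  have := (@gT3 _ chi Hsf Hint Htr None s t x z ltac:(neq) ltac:(neq) ltac:(neq) ltac:(neq) ltac:(neq) ltac:(neq) ltac:(neq) ltac:(neq) ltac:(neq) ltac:(neq) NI ltac:(lia) ltac:(lia) ltac:(lia) ltac:(lia) ltac:(lia)); lia.
case: (classic (z = None)) => [Ez|zN].
  subst z.
  have sN' : (s == None) = false by apply/negbTE/eqP; neq.
  have tN' : (t == None) = false by apply/negbTE/eqP; neq.
  have xN' : (x == None) = false by apply/negbTE/eqP; neq.
  have yN' : (y == None) = false by apply/negbTE/eqP; neq.
  rewrite ?eqxx ?sN' ?tN' ?xN' ?yN' /= in h1 h2 h3 h4 h5 *.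
  have := (@gT4 _ chi Hsf Hint Htr None s t x y ltac:(neq) ltac:(neq) ltac:(neq) ltac:(neq) ltac:(neq) ltac:(neq) ltac:(neq) ltac:(neq) ltac:(neq) ltac:(neq) NI ltac:(lia) ltac:(lia) ltac:(lia) ltac:(lia) ltac:(lia)); lia.
have {sN}sN : (s == None) = false by apply/negbTE/eqP. have {tN}tN : (t == None) = false by apply/negbTE/eqP. have {xN}xN : (x == None) = false by apply/negbTE/eqP. have {yN}yN : (y == None) = false by apply/negbTE/eqP. have {zN}zN : (z == None) = false by apply/negbTE/eqP.
rewrite sN tN xN yN zN /= in h1 h2 h3 h4 h5 *.
exact: (Htr st sx sy sz tx ty tz (conj xy (conj yz xz)) h1 h2 h3 h4 h5).
Qed.

End Main.

Section SecE.

Local Open Scope R_scope.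

Lemma fin_small (T : eqType) (L : seq T) (P : T -> R -> Prop) :
  (forall t, t \in L -> exists r, r > 0 /\ forall e, 0 < e <= r -> P t e) ->
  exists r, r > 0 /\ forall t, t \in L -> forall e, 0 < e <= r -> P t e.
Proof.
elim: L => [|a L IH] H.
  exists 1; split; [lra | by []].
have [ra [ra0 Ha]] := H a (mem_head _ _).
have [rL [rL0 HL]] := IH (fun t Ht => H t (ltac:(by rewrite inE Ht orbT))).
exists (Rmin ra rL); split; first by apply: Rmin_glb_lt.
move=> t; rewrite inE => /orP[/eqP ->|Ht] e [e0 er].
  apply: Ha; split => //; apply: Rle_trans er (Rmin_l _ _).
apply: HL => //; split => //; apply: Rle_trans er (Rmin_r _ _).
Qed.

Lemma small_pos (a b : R) : a > 0 -> exists r, r > 0 /\ forall e, 0 < e <= r -> a + e * b > 0.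
Proof.
move=> a0; case: (Rle_or_lt 0 b) => hb.
  exists 1; split; [lra|] => e [e0 _]; nra.
exists (a / (- b + 1)); split.
  apply: Rdiv_lt_0_compat => //; lra.
move=> e [e0 er].
have : e * (- b + 1) <= a.
  have -> : a = a / (- b + 1) * (- b + 1) by field; lra.
  apply: Rmult_le_compat_r => //; lra.
nra.
Qed.

Definition gg (al be ep u1 u2 : R) (P : R * R) := al * (fst P - u1) + be * (snd P - u2) - ep.
Definition qq (al be ep u1 u2 : R) (P : R * R) :=
  ((snd P - u2) / gg al be ep u1 u2 P, (fst P - u1) / gg al be ep u1 u2 P).

Lemma qq_orient al be ep u1 u2 a b c :
  gg al be ep u1 u2 a <> 0 -> gg al be ep u1 u2 b <> 0 -> gg al be ep u1 u2 c <> 0 ->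
  orient_det (qq al be ep u1 u2 a) (qq al be ep u1 u2 b) (qq al be ep u1 u2 c) *
  (gg al be ep u1 u2 a * gg al be ep u1 u2 b * gg al be ep u1 u2 c) = ep * orient_det a b c.
Proof.
rewrite /orient_det /qq /= => ha hb hc.
move: ha hb hc; rewrite /gg => ha hb hc.
field; auto.
Qed.

Lemma qq_inj al be ep u1 u2 a b : ep <> 0 ->
  gg al be ep u1 u2 a <> 0 -> gg al be ep u1 u2 b <> 0 ->
  qq al be ep u1 u2 a = qq al be ep u1 u2 b -> a = b.
Proof.
move=> e0 ha hb; rewrite /qq; case=> e1 e2.
have key : ep * (gg al be ep u1 u2 a - gg al be ep u1 u2 b) =
  al * ((fst b - u1) * gg al be ep u1 u2 a - (fst a - u1) * gg al be ep u1 u2 b) +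
  be * ((snd b - u2) * gg al be ep u1 u2 a - (snd a - u2) * gg al be ep u1 u2 b).
  rewrite /gg; ring.
move: key e1 e2 ha hb.
set ga := gg al be ep u1 u2 a; set gb := gg al be ep u1 u2 b => key e1 e2 ha hb.
have f1 : (snd a - u2) * gb = (snd b - u2) * ga.
  field_simplify_eq in e1; auto; lra.
have f2 : (fst a - u1) * gb = (fst b - u1) * ga.
  field_simplify_eq in e2; auto; lra.
have gab : ga = gb.
  have : ep * (ga - gb) = 0 by rewrite key -f1 -f2; ring.
  case/Rmult_integral => //; lra.
rewrite gab in f1 f2.
have h1 : fst a = fst b by apply: (Rmult_eq_reg_r gb) => //; lra.
have h2 : snd a = snd b by apply: (Rmult_eq_reg_r gb) => //; lra.
by rewrite (surjective_pairing a) (surjective_pairing b) h1 h2.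
Qed.

End SecE.


Section Real.
Variable X : finType.
Variable chi : option X -> option X -> option X -> Z.
Hypothesis Hsf : sign_function chi.
Hypothesis Hext : extreme chi None.

Local Open Scope R_scope.

Lemma real_twist : realizable chi -> realizable (twist chi).
Proof.
case=> p [pinj [pnz pchi]].
have [w [wN Hc]] := Hext.
case: (classic (exists z, z <> None /\ z <> w)) => [[z0 [z0N z0w]]|nz]; last first.
  exists p; split => //.
  have F : forall a b c : option X, distinct3 a b c -> False.
    move=> a b c [ab [bc ac]]; apply: nz.
    destruct (classic (a = None)); destruct (classic (a = w)); destruct (classic (b = None));
    destruct (classic (b = w)); destruct (classic (c = None)); destruct (classic (c = w));
    first [ (exfalso; congruence) | (exists a; split; assumption) | (exists b; split; assumption)
          | (exists c; split; assumption)].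
  by split => a b c D; exfalso; exact: F D.
pose cc := chi None w z0.
have D0 : distinct3 None w z0 by split; [|split]; congruence.
have cpm : cc = 1%Z \/ cc = (-1)%Z := proj1 (Hsf D0).
have Hc' : forall x, x <> None -> x <> w -> chi None w x = cc := fun x xN xw => Hc x z0 xN xw z0N z0w.
pose s := IZR cc.
pose u1 := fst (p None); pose u2 := snd (p None).
pose d1 := fst (p w) - u1; pose d2 := snd (p w) - u2.
pose lin (P : R * R) := s * (d1 * (snd P - u2) - d2 * (fst P - u1)).
pose dot (P : R * R) := d1 * (fst P - u1) + d2 * (snd P - u2).
have pos : forall x, x <> None -> x <> w -> lin (p x) > 0.
  move=> x xN xw.
  have Dx : distinct3 None w x by split; [|split]; congruence.
  have hor : orient_det (p None) (p w) (p x) = d1 * (snd (p x) - u2) - d2 * (fst (p x) - u1)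
    by rewrite /orient_det.
  have := pnz _ _ _ Dx; have := pchi _ _ _ Dx; rewrite Hc' // hor /lin /s.
  case: cpm => -> [H1 H2] H3.
    have := H1 erefl; lra.
  have H4 : ~ (d1 * (snd (p x) - u2) - d2 * (fst (p x) - u1) > 0) by move=> /H2.
  lra.
have [del [del0 Hdel]] := fin_small (L:=enum X)
   (P:=fun x e => Some x <> w -> lin (p (Some x)) + e * dot (p (Some x)) > 0) ltac:(
  move=> x _; case: (classic (Some x = w)) => E;
  [ exists 1; split; [lra | by move=> e _ F] |
    have [r [r0 Hr]] := small_pos (dot (p (Some x))) (pos (Some x) ltac:(by []) E);
    exists r; split => // e he _; exact: Hr ]).
pose g0 (P : R * R) := lin P + del * dot P.
have dpos : d1 * d1 + d2 * d2 > 0.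
  case: (Req_dec d1 0) => h1; case: (Req_dec d2 0) => h2; try nra.
  exfalso; apply: wN; apply: pinj.
  rewrite (surjective_pairing (p w)) (surjective_pairing (p None)).
  rewrite /d1 /d2 /u1 /u2 in h1 h2; f_equal; lra.
have g0pos : forall a, a <> None -> g0 (p a) > 0.
  case => [x|] // _; case: (classic (Some x = w)) => E.
    rewrite E /g0 /lin /dot.
    have e2 : snd (p w) - u2 = d2 by [].
    have e1 : fst (p w) - u1 = d1 by [].
    rewrite e1 e2; nra.
  exact: (Hdel x (mem_enum _ _) del (conj del0 (Rle_refl del)) E).
have [ep [ep0 Hep]] := fin_small (L:=enum X) (P:=fun x e => g0 (p (Some x)) - e > 0) ltac:(
  move=> x _; exists (g0 (p (Some x)) / 2); split;
  [ have := g0pos (Some x) ltac:(by []); lra | move=> e [e0 er]; have := g0pos (Some x) ltac:(by []); lra]).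
pose al := s * (- d2) + del * d1.
pose be := s * d1 + del * d2.
have gE : forall P, gg al be ep u1 u2 P = g0 P - ep.
  by move=> P; rewrite /gg /g0 /lin /dot /al /be; ring.
have Gs : forall a, a <> None -> gg al be ep u1 u2 (p a) > 0.
  case => [x|] // _; rewrite gE; exact: (Hep x (mem_enum _ _) ep (conj ep0 (Rle_refl ep))).
have GN : gg al be ep u1 u2 (p None) = - ep.
  by rewrite gE /g0 /lin /dot /u1 /u2; ring.
have gnz : forall a, gg al be ep u1 u2 (p a) <> 0.
  case => [x|]; last by rewrite GN; lra.
  by have := Gs (Some x) ltac:(by []); lra.
exists (fun a => qq al be ep u1 u2 (p a)).
split.
  move=> a b E; apply: pinj; apply: (qq_inj _ _ _ E) => //; lra.
split.
  move=> a b c Dabc H.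
  have := qq_orient (gnz a) (gnz b) (gnz c); rewrite H Rmult_0_l => H'.
  have := pnz _ _ _ Dabc; have : ep <> 0 by lra.
  move=> h1 h2; symmetry in H'; case: (Rmult_integral _ _ H') => //.
move=> a b c Dabc.
have Id := qq_orient (gnz a) (gnz b) (gnz c).
have Hp := pchi a b c Dabc; have Hn := pnz _ _ _ Dabc.
have [pm _] := Hsf Dabc.
move: Id Hp Hn.
set OQ := orient_det _ _ _; set OP := orient_det (p a) (p b) (p c).
move=> Id Hp Hn.
case: (classic (a <> None /\ b <> None /\ c <> None)) => [[aN [bN cN]]|HN].
  rewrite twist_some //.
  have Pr : gg al be ep u1 u2 (p a) * gg al be ep u1 u2 (p b) * gg al be ep u1 u2 (p c) > 0.
    have := Gs a aN; have := Gs b bN; have := Gs c cN.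
    move=> *; apply: Rmult_lt_0_compat => //; apply: Rmult_lt_0_compat => //.
  move: Pr Id; set Pp := _ * _ * _ => Pr Id.
  rewrite Hp; split => h; nra.
have HN' : a = None \/ b = None \/ c = None.
  apply: NNPP => F; apply: HN; split; [|split] => E; apply: F; tauto.
rewrite twist_none //.
case: Dabc => [ab [bc ac]].
have Pr : gg al be ep u1 u2 (p a) * gg al be ep u1 u2 (p b) * gg al be ep u1 u2 (p c) < 0.
  case: HN' => [E|[E|E]]; rewrite E GN ?E in ab bc ac *.
  - have := Rmult_lt_0_compat _ _ (Gs b (nesym ab)) (Gs c (nesym ac)); nra.
  - have := Rmult_lt_0_compat _ _ (Gs a ab) (Gs c (nesym bc)); nra.
  - have := Rmult_lt_0_compat _ _ (Gs a ac) (Gs b bc); nra.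
move: Pr Id; set Pp := _ * _ * _ => Pr Id.
split.
  move=> h.
  have hc : chi a b c = (-1)%Z by lia.
  have : ~ OP > 0 by move=> /Hp; rewrite hc.
  move=> h2; nra.
move=> h.
have : OP < 0 by nra.
move=> h2; case: pm => hc; last by rewrite hc.
have := proj1 Hp hc; lra.
Qed.

End Real.


Theorem proposition2p8 (X : finType) (chi : option X -> option X -> option X -> Z) :
  rooted_chirotope chi None ->
  chirotope (twist chi) /\ (realizable chi -> realizable (twist chi)).
Proof.
move=> [[Hsf [Hint Htr]] Hext]; split.
  split; first by apply: sf_twist.
  split; first by apply: int_twist.
  by apply: tr_twist.
by apply: real_twist.
Qed.
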